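(* Let $G$ be a finite simple graph of order $n$ with minimum degree $\delta=\delta(G)\geq 3$. Then $$\gamma_{st}(G)\leq n-2\left\lfloor\frac{2\rho_{o}(G)+\delta-3}{2}\right\rfloor,$$ and this bound is sharp (there exist graphs with $\delta\ge 3$ attaining equality).
   Context: For a vertex $v$, $N(v)$ denotes the open neighborhood of $v$ (the set of vertices adjacent to $v$). A signed total dominating function (STDF) of $G$ is a function $f:V(G)\to\{-1,1\}$ such that $f(N(v))=\sum_{u\in N(v)}f(u)\geq 1$ for every vertex $v$. The signed total domination number $\gamma_{st}(G)$ is the minimum of $f(V(G))=\sum_{v\in V(G)}f(v)$ over all STDFs $f$ of $G$. A set $B\subseteq V(G)$ is an open packing if $N(u)\cap N(v)=\emptyset$ for all distinct $u,v\in B$; the open packing number $\rho_o(G)$ is the maximum cardinality of an open packing in $G$. *)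

(* Defs.v *)
From mathcomp Require Import all_boot all_order all_algebra.
Set Implicit Arguments. Unset Strict Implicit. Unset Printing Implicit Defensive.
Import Order.TTheory GRing.Theory Num.Theory.

Definition simple_graph (T : finType) (e : rel T) : Prop :=
  symmetric e /\ irreflexive e.

Definition nbhd (T : finType) (e : rel T) (v : T) : {set T} := [set u | e v u].

Definition deg (T : finType) (e : rel T) (v : T) : nat := #|nbhd e v|.

(* minimum degree delta(G); (equals #|T| = 0 only for the empty graph) *)
Definition mindeg (T : finType) (e : rel T) : nat :=
  \big[minn/#|T|]_(v : T) deg e v.

Definition is_stdf (T : finType) (e : rel T) (f : T -> int) : Prop :=
  (forall v, f v = 1%R \/ f v = (-1)%R) /\
  (forall v, (1 <= \sum_(u in nbhd e v) f u)%R).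

Definition weight (T : finType) (f : T -> int) : int := (\sum_(v : T) f v)%R.

Definition is_gamma_st (T : finType) (e : rel T) (g : int) : Prop :=
  (exists f, is_stdf e f /\ weight f = g) /\
  (forall f, is_stdf e f -> (g <= weight f)%R).

Definition open_packing (T : finType) (e : rel T) (B : {set T}) : bool :=
  [forall u in B, forall v in B, (u != v) ==> [disjoint nbhd e u & nbhd e v]].

Definition rho_o (T : finType) (e : rel T) : nat :=
  \max_(B : {set T} | open_packing e B) #|B|.

(* the bound  n - 2 * floor((2 rho_o + delta - 3)/2)  (numerator is >= 0 when delta >= 3) *)
Definition stdf_bound (T : finType) (e : rel T) : int :=
  (#|T|%:Z - 2%:Z * (((2 * rho_o e + mindeg e - 3) %/ 2)%N)%:Z)%R.

(* Main.v *)
Require Import Defs.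
From mathcomp Require Import all_boot all_order all_algebra zify.
Import Order.TTheory GRing.Theory Num.Theory.

Lemma bigmin_le (I : eqType) (r : seq I) x (F : I -> nat) j :
  j \in r -> (\big[minn/x]_(i <- r) F i <= F j)%N.
Proof.
elim: r => //= i r IH; rewrite inE big_cons => /predU1P [->|/IH H].
  exact: geq_minl.
exact: leq_trans (geq_minr _ _) H.
Qed.

Lemma bigmin_lex (I : eqType) (r : seq I) x (F : I -> nat) :
  (\big[minn/x]_(i <- r) F i <= x)%N.
Proof. elim/big_rec: _ => // i y _ H; exact: leq_trans (geq_minr _ _) H. Qed.

Lemma ex_subset (T : finType) (A : {set T}) k :
  (k <= #|A|)%N -> exists S : {set T}, S \subset A /\ #|S| = k.
Proof.
elim: k => [|k IH] H.
  by exists set0; rewrite sub0set cards0.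
have [S [SA cS]] := IH (ltnW H).
have : (0 < #|A :\: S|)%N by rewrite cardsD (setIidPr SA) cS subn_gt0.
case/card_gt0P => x; rewrite inE => /andP [xS xA].
exists (x |: S); split; first by rewrite subUset sub1set xA SA.
by rewrite cardsU1 xS cS.
Qed.

Lemma sum_sign (T : finType) (A D : {set T}) :
  (\sum_(x in A) (if x \in D then (-1)%R else 1%R) : int)%R
   = (#|A|%:Z - 2%:Z * #|A :&: D|%:Z)%R.
Proof.
rewrite (bigID (mem D)) /=.
rewrite (eq_bigr (fun _ => (-1)%R)); last by move=> i /andP [_ ->].
rewrite [X in (_ + X)%R](eq_bigr (fun _ => 1%R)); last by move=> i /andP [_ /negbTE ->].
rewrite (eq_bigl (fun i => i \in A :&: D)); last by move=> i; rewrite in_setI.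
rewrite [X in (_ + X)%R](eq_bigl (fun i => i \in A :\: D)); last by move=> i; rewrite in_setD andbC.
rewrite !sumr_const -(cardsID D A).
rewrite mulNrn !natz; lia.
Qed.

Lemma main_f (T : finType) (e : rel T) : simple_graph e -> (3 <= mindeg e)%N ->
  exists f, is_stdf e f /\ weight f = stdf_bound e.
Proof.
move=> [esym eirr] hd.
have degge : forall v, (mindeg e <= deg e v)%N.
  by move=> v; rewrite /mindeg; apply: bigmin_le; apply: mem_index_enum.
have [B BP Bmax] : {B | open_packing e B & rho_o e = #|B|}.
  rewrite /rho_o; apply: eq_bigmax_cond; apply/card_gt0P; exists set0.
  by rewrite /open_packing; apply/forall_inP => u; rewrite inE.
have B1 : forall w, (#|nbhd e w :&: B| <= 1)%N.
  move=> w; apply/card_le1_eqP => x y; rewrite !inE => /andP [wx xB] /andP [wy yB].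
  apply/eqP; apply: contraT; rewrite eq_sym => nxy.
  move: BP => /forall_inP /(_ x xB) /forall_inP /(_ y yB) /implyP /(_ nxy) /disjointFr H.
  have := H w; rewrite !inE (esym x w) wx (esym y w) wy.
  by move=> /(_ isT).
case: (pickP (fun _ : T => true)) => [v _| none]; last first.
  have c0 : #|T| = 0%N by apply: eq_card0.
  have := @bigmin_lex T (index_enum T) #|T| (deg e).
  rewrite -/(mindeg e) c0; lia.
have sz : ((mindeg e - 3) %/ 2 <= #|nbhd e v :\: B|)%N.
  rewrite cardsD; have := B1 v; have := degge v; rewrite /deg; lia.
have [S [SA cS]] := @ex_subset T _ _ sz.
have BS : B :&: S = set0.
  apply/setP => x; rewrite !inE; apply/negbTE; apply/andP => [[xB xS]].
  by have := subsetP SA x xS; rewrite !inE xB.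
exists (fun x => if x \in B :|: S then (-1)%R else 1%R); split; first split.
- by move=> x; case: ifP; auto.
- move=> w; rewrite sum_sign setIUr.
  have h1 := (leq_card_setU (nbhd e w :&: B) (nbhd e w :&: S)).1.
  have h2 : (#|nbhd e w :&: S| <= #|S|)%N by apply: subset_leq_card; apply: subsetIr.
  have := B1 w; have := degge w; rewrite /deg; lia.
- rewrite /weight.
  transitivity (\sum_(x in [set: T]) (if x \in B :|: S then (-1)%R else 1%R) : int)%R.
    by apply: eq_bigl => x; rewrite inE.
  rewrite sum_sign setTI cardsT cardsU BS cards0 /stdf_bound Bmax cS.
  lia.
Qed.

Definition e4 : rel 'I_4 := fun i j => i != j.

Lemma deg4 v : deg e4 v = 3%N.
Proof.
rewrite /deg (_ : nbhd e4 v = [set~ v]) ?cardsC1 ?card_ord //.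
by apply/setP => u; rewrite !inE /e4 eq_sym.
Qed.

Lemma md4 : mindeg e4 = 3%N.
Proof.
rewrite /mindeg (eq_bigr (fun _ => 3%N)); last by move=> v _; exact: deg4.
by rewrite big_const card_ord.
Qed.

Lemma rho4 : rho_o e4 = 1%N.
Proof.
apply/eqP; rewrite eqn_leq; apply/andP; split.
  apply/bigmax_leqP => B BP; apply/card_le1_eqP => u w uB wB.
  apply/eqP; apply: contraT; rewrite eq_sym => nuw.
  have : (0 < #|~: [set u; w]|)%N.
    by rewrite cardsCs setCK cards2 (negbTE nuw) card_ord.
  case/card_gt0P => x; rewrite !inE negb_or => /andP [xu xw].
  move: BP => /forall_inP /(_ u uB) /forall_inP /(_ w wB) /implyP /(_ nuw) /disjointFr H.
  have := H x; rewrite !inE /e4 eq_sym xu eq_sym xw.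
  by move=> /(_ isT).
apply: leq_trans (leq_bigmax_cond _ (_ : open_packing e4 [set ord0])); first by rewrite cards1.
apply/forall_inP => u; rewrite inE => /eqP ->; apply/forall_inP => w; rewrite inE => /eqP ->.
by rewrite eqxx.
Qed.

Lemma rb4 : stdf_bound e4 = 2%:Z%R.
Proof. by rewrite /stdf_bound rho4 md4 card_ord. Qed.

Lemma sg4 : simple_graph e4.
Proof. by split; [move=> i j; rewrite /e4 eq_sym | move=> i; rewrite /e4 eqxx]. Qed.

Lemma low4 g : is_stdf e4 g -> (2%:Z <= weight g)%R.
Proof.
move=> [gv gn].
have key : forall v, (\sum_(u in nbhd e4 v) g u = weight g - g v)%R.
  move=> v; have -> : weight g = (g v + \sum_(u | u != v) g u)%R by rewrite /weight (bigD1 v).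
  rewrite [(g v + _)%R]addrC addrK.
  by apply: eq_bigl => u; rewrite inE /e4 eq_sym.
rewrite leNgt; apply/negP => hW.
have allm : forall v, g v = (-1)%R.
  by move=> v; have := gn v; rewrite key; case: (gv v) => hv; rewrite hv //; lia.
have W : weight g = (-4)%R.
  by rewrite /weight (eq_bigr (fun _ => (-1)%R)) // sumr_const card_ord.
by have := gn ord0; rewrite key allm W.
Qed.

Theorem theorem2p1 :
  (forall (T : finType) (e : rel T), simple_graph e -> 3 <= mindeg e ->
     forall g : int, is_gamma_st e g -> (g <= stdf_bound e)%R)
  /\
  (exists (m : nat) (e : rel 'I_m), simple_graph e /\ 3 <= mindeg e /\
     is_gamma_st e (stdf_bound e)).
Proof.
split.
  move=> T e sg hd g [_ gmin].
  have [f [Hf Hw]] := @main_f T e sg hd.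
  by rewrite -Hw; apply: gmin.
exists 4%N, e4; split; first exact: sg4.
split; first by rewrite md4.
split.
  have [f [Hf Hw]] := @main_f _ e4 sg4 (eq_leq (esym md4)).
  by exists f.
by move=> f Hf; rewrite rb4; apply: low4.
Qed.
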